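(* Let $\mathcal E:\mathbb R^d\to\mathbb R$ be positive and bounded, with $\underline{\mathcal E}:=\inf\mathcal E$, $\overline{\mathcal E}:=\sup\mathcal E$, and for $\beta>0$ let $\gamma_\beta^{\mathcal E}(v,v_* ):=\frac{e^{-\beta\mathcal E(v_* )}}{e^{-\beta\mathcal E(v)}+e^{-\beta\mathcal E(v_* )}}$ and $C_{\beta,\mathcal E}:=e^{\beta(\overline{\mathcal E}-\underline{\mathcal E})}$. Then for any $\beta>0$ there is a constant $\xi_\beta^{\mathcal E}\in(0,1)$ such that for all $v,v_*\in\mathbb R^d$ $$\big(\gamma_\beta^{\mathcal E}(v,v_* )\big)^2\le \xi_\beta^{\mathcal E}\,\gamma_{2\beta}^{\mathcal E}(v,v_* ),$$ and moreover $1-\xi_\beta^{\mathcal E}\ge (C_{\beta,\mathcal E})^{-1}$ if $\beta$ is sufficiently large. *)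

(* Defs.v *)
From mathcomp Require Import all_boot all_order all_algebra.
From mathcomp Require Import classical_sets reals.
From mathcomp Require Import sequences.
From mathcomp.analysis Require Import exp.
Set Implicit Arguments. Unset Strict Implicit. Unset Printing Implicit Defensive.
Import Order.TTheory GRing.Theory Num.Theory.
Local Open Scope ring_scope.
Local Open Scope classical_set_scope.

Definition gammaE (R : realType) (d : nat) (E : 'rV[R]_d -> R) (beta : R)
  (v vs : 'rV[R]_d) : R :=
  expR (- (beta * E vs)) / (expR (- (beta * E v)) + expR (- (beta * E vs))).

Definition Esup (R : realType) (d : nat) (E : 'rV[R]_d -> R) : R := sup (range E).
Definition Einf (R : realType) (d : nat) (E : 'rV[R]_d -> R) : R := inf (range E).

Definition CbE (R : realType) (d : nat) (E : 'rV[R]_d -> R) (beta : R) : R :=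
  expR (beta * (Esup E - Einf E)).

(* Main.v *)
Require Import Defs.
From mathcomp Require Import all_boot all_order all_algebra.
From mathcomp Require Import classical_sets reals.
From mathcomp Require Import sequences.
From mathcomp.analysis Require Import exp.
From mathcomp Require Import ring lra.
Import Order.TTheory GRing.Theory Num.Theory.
Local Open Scope ring_scope.

Lemma key_ineq (R : realType) (a b C : R) : 0 < a -> 0 < b -> 1 <= C -> a <= C * b -> b <= C * a ->
  (b / (a + b)) ^+ 2 <= (1 - 2 * C / (1 + C) ^+ 2) * (b ^+ 2 / (a ^+ 2 + b ^+ 2)).
Proof.
move=> a0 b0 C1 h1 h2.
rewrite -subr_ge0.
have -> : (1 - 2 * C / (1 + C) ^+ 2) * (b ^+ 2 / (a ^+ 2 + b ^+ 2)) - (b / (a + b)) ^+ 2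
  = (b ^+ 2 * (2 * (C * a - b) * (C * b - a))) / ((1 + C) ^+ 2 * (a ^+ 2 + b ^+ 2) * (a + b) ^+ 2).
  field; apply/and3P; split; apply/lt0r_neq0; nra.
apply: divr_ge0; last by nra.
apply: mulr_ge0; first nra.
apply: mulr_ge0; nra.
Qed.

Theorem lemma1 (R : realType) (d : nat) (E : 'rV[R]_d -> R)
  (Epos : forall v, 0 < E v) (Ebdd : exists M : R, forall v, E v <= M) :
  exists xi : R -> R,
    (forall beta : R, 0 < beta ->
       (0 < xi beta < 1) /\
       (forall v vs : 'rV[R]_d,
          gammaE E beta v vs ^+ 2 <= xi beta * gammaE E (2 * beta) v vs)) /\
    ((exists v w : 'rV[R]_d, E v != E w) ->
     exists beta0 : R, forall beta : R, beta0 <= beta ->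
       (CbE E beta)^-1 <= 1 - xi beta).
Proof.
have hub : has_ubound (range E).
  by case: Ebdd => M HM; exists M => _ [v _ <-].
have hlb : has_lbound (range E).
  by exists 0 => _ [v _ <-]; exact: ltW.
have Esup_ge v : E v <= Esup E by apply: ub_le_sup => //; exists v.
have Einf_le v : Einf E <= E v by apply: ge_inf => //; exists v.
have D0 : 0 <= Esup E - Einf E.
  by rewrite subr_ge0; apply: le_trans (Einf_le 0) (Esup_ge 0).
exists (fun beta => 1 - 2 * CbE E beta / (1 + CbE E beta) ^+ 2); split.
  move=> beta b0.
  have C1 : 1 <= CbE E beta.
    rewrite /CbE -expR0 ler_expR; exact: mulr_ge0 (ltW b0) D0.
  split.
    have h : forall C : R, 1 <= C -> 0 < 2 * C / (1 + C) ^+ 2 < 1.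
      move=> C C1'; apply/andP; split.
        by apply: divr_gt0; [lra | apply: exprn_gt0; lra].
      rewrite ltr_pdivrMr; last by apply: exprn_gt0; lra.
      rewrite mul1r; nra.
    have := h _ C1.
    lra.
  move=> v vs.
  rewrite /gammaE.
  have e2 : forall x, expR (- (2 * beta * E x)) = expR (- (beta * E x)) ^+ 2.
    by move=> x; rewrite expr2 -expRD; congr expR; ring.
  rewrite !e2.
  have ineq : forall x y, expR (- (beta * E x)) <= CbE E beta * expR (- (beta * E y)).
    move=> x y; rewrite /CbE -expRD ler_expR.
    have := Esup_ge y; have := Einf_le x; nra.
  by apply: key_ineq => //; apply: expR_gt0.
case=> v [w] /eqP nvw.
set D := Esup E - Einf E.
have Dpos : 0 < D.
  have := Esup_ge v; have := Einf_le v; have := Esup_ge w; have := Einf_le w.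
  rewrite /D.
  case: (ltgtP (E v) (E w)) => // h; lra.
exists (3 / D) => beta hb.
have hbD : 3 <= beta * D by rewrite -ler_pdivrMr.
have : 3 <= CbE E beta.
  rewrite /CbE; apply: le_trans (expR_ge1Dx _); rewrite -/D; lra.
move: (CbE E beta) => C C3.
rewrite opprB addrC subrK.
rewrite -subr_ge0.
have -> : 2 * C / (1 + C) ^+ 2 - C^-1 = (2 * C ^+ 2 - (1 + C) ^+ 2) / (C * (1 + C) ^+ 2).
  by field; apply/andP; split; apply/lt0r_neq0; nra.
apply: divr_ge0; nra.
Qed.
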